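(* (De Morgan laws.) (i) For every proposition $A$: $\vdash^H_{\mathbf{CPL*}}\Diamond\neg A\supset\neg\Box A$ and $\vdash^H_{\mathbf{CPL*}}\Box\neg A\supset\neg\Diamond A$. (ii) Neither $\Diamond\neg A\supset\neg\Box A$ nor $\Box\neg A\supset\neg\Diamond A$ is an axiom of CPL. (iii) For every converse well-founded $(W,\prec)$, context $\Gamma$, world $w$ and proposition $A$: if there is no $w'$ with $w\prec w'$ and $\Gamma\Rightarrow\bot[w']$, then $\Gamma\Rightarrow(\Diamond\neg A\supset\neg\Box A)[w]$ and $\Gamma\Rightarrow(\Box\neg A\supset\neg\Diamond A)[w]$. (iv) $\neg\Diamond A\supset\Box\neg A$ is an axiom of neither CPL nor CPL*. (v) $\neg\Box A\supset\Diamond\neg A$ is an axiom of neither CPL nor CPL*.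
   Context: A set $W$ of worlds with a binary accessibility relation $\prec$ is converse well-founded if there is no infinite chain $w_0\prec w_1\prec\cdots$; $\prec^*$ denotes its reflexive–transitive closure. Propositions: $A,B,C ::= Q\mid\bot\mid A\supset B\mid\Diamond A\mid\Box A$ ($Q$ atomic); $\neg A$ abbreviates $A\supset\bot$. A context $\Gamma$ is a finite collection of judgments $A[w]$. All judgments below are defined one world at a time (provability at $w$ after provability at all worlds reachable from $w$ by one or more $\prec$-steps), each as the least relation closed under its rules. CPL natural deduction $\Gamma\vdash_{\mathbf{CPL}}A[w]$: (hyp) $\Gamma,A[w]\vdash A[w]$; ($\bot E$) $\Gamma\vdash\bot[w]$ implies $\Gamma\vdash C[w]$; ($\supset I$) $\Gamma,A[w]\vdash B[w]$ implies $\Gamma\vdash A\supset B[w]$; ($\supset E$) $\Gamma\vdash A\supset B[w]$ and $\Gamma\vdash A[w]$ imply $\Gamma\vdash B[w]$; ($\Diamond I$) $w\prec w'$ and $\Gamma\vdash A[w']$ imply $\Gamma\vdash\Diamond A[w]$; ($\Box I$) if $\Gamma\vdash A[w']$ for all $w'$ with $w\prec w'$ then $\Gamma\vdash\Box A[w]$; ($\Diamond E$) if $\Gamma\vdash\Diamond A[w]$ and for all $w'$ with $w\prec w'$, $\Gamma\vdash A[w']$ implies $\Gamma\vdash C[w]$, then $\Gamma\vdash C[w]$; ($\Box E$) if $\Gamma\vdash\Box A[w]$ and ($\Gamma\vdash A[w']$ for all $w'$ with $w\prec w'$) implies $\Gamma\vdash C[w]$, then $\Gamma\vdash C[w]$.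 CPL* natural deduction $\Gamma\vdash_{\mathbf{CPL*}}A[w]$: identical except ($\bot E$) $w'\prec^* w$ and $\Gamma\vdash\bot[w]$ imply $\Gamma\vdash C[w']$; ($\Diamond E$) if $w''\prec^* w$, $\Gamma\vdash\Diamond A[w]$, and for all $w'$ with $w\prec w'$, $\Gamma\vdash A[w']$ implies $\Gamma\vdash C[w'']$, then $\Gamma\vdash C[w'']$; ($\Box E$) if $w''\prec^* w$, $\Gamma\vdash\Box A[w]$, and ($\Gamma\vdash A[w']$ for all $w'$ with $w\prec w'$) implies $\Gamma\vdash C[w'']$, then $\Gamma\vdash C[w'']$. CPL sequent calculus $\Gamma\Rightarrow A[w]$: (init) $\Gamma,Q[w]\Rightarrow Q[w]$ for $Q$ atomic; ($\bot L$) $\bot[w]\in\Gamma$ implies $\Gamma\Rightarrow C[w]$; ($\supset R$) $\Gamma,A[w]\Rightarrow B[w]$ implies $\Gamma\Rightarrow A\supset B[w]$; ($\supset L$) $A\supset B[w]\in\Gamma$, $\Gamma\Rightarrow A[w]$ and $\Gamma,B[w]\Rightarrow C[w]$ imply $\Gamma\Rightarrow C[w]$; ($\Diamond R$) $w\prec w'$ and $\Gamma\Rightarrow A[w']$ imply $\Gamma\Rightarrow\Diamond A[w]$; ($\Box R$) if $\Gamma\Rightarrow A[w']$ for all $w'$ with $w\prec w'$ then $\Gamma\Rightarrow\Box A[w]$; ($\Diamond L$) if $\Diamond A[w]\in\Gamma$ and for all $w'$ with $w\prec w'$, $\Gamma\Rightarrow A[w']$ implies $\Gamma\Rightarrow C[w]$,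 then $\Gamma\Rightarrow C[w]$; ($\Box L$) if $\Box A[w]\in\Gamma$ and ($\Gamma\Rightarrow A[w']$ for all $w'$ with $w\prec w'$) implies $\Gamma\Rightarrow C[w]$, then $\Gamma\Rightarrow C[w]$. $\vdash^H_{\mathbf{CPL*}}A$ means: for every converse well-founded $(W,\prec)$, every $w\in W$ and every context $\Gamma$, $\Gamma\vdash_{\mathbf{CPL*}}A[w]$. A schema is ''not an axiom'' of CPL (resp. CPL* ) if there exist a converse well-founded $(W,\prec)$, a world $w$, a context $\Gamma$ and an instance $A$ of the schema with $\Gamma\nvdash_{\mathbf{CPL}}A[w]$ (resp. $\Gamma\nvdash_{\mathbf{CPL*}}A[w]$). *)

(* Defs.v *)
From Stdlib Require Import List Relations Wellfounded Classical ClassicalEpsilon.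
Import ListNotations.

Inductive form : Type :=
| Atom : nat -> form
| Bot : form
| Imp : form -> form -> form
| Dia : form -> form
| Box : form -> form.

Definition Neg (A : form) : form := Imp A Bot.

Section Judgments.
Context {W : Type} (R : W -> W -> Prop).

Definition ctx := list (form * W).

Definition conv_wf : Prop :=
  ~ exists f : nat -> W, forall n, R (f n) (f (S n)).

Definition Below : W -> W -> Prop := clos_trans W (fun a b => R b a).

Lemma conv_wf_wf : conv_wf -> well_founded (fun a b => R b a).
Proof.
  intros H x0. apply NNPP; intros Hx0.
  assert (Hstep : forall x, ~ Acc (fun a b => R b a) x ->
                    exists y, R x y /\ ~ Acc (fun a b => R b a) y).
  { intros x Hx. apply NNPP; intros Hn. apply Hx. constructor.
    intros y Hy. apply NNPP; intros Hy'. apply Hn. exists y; split; assumption. }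
  set (S := { x : W | ~ Acc (fun a b => R b a) x }).
  assert (next : forall s : S, { t : S | R (proj1_sig s) (proj1_sig t) }).
  { intros [x Hx]. destruct (constructive_indefinite_description _ (Hstep x Hx))
      as [y [Hxy Hy]]. exists (exist _ y Hy). exact Hxy. }
  set (g := fix g (n : nat) : S :=
              match n with 0 => exist _ x0 Hx0 | S n => proj1_sig (next (g n)) end).
  apply H. exists (fun n => proj1_sig (g n)). intros n. simpl.
  exact (proj2_sig (next (g n))).
Qed.

Lemma Below_wf : conv_wf -> well_founded Below.
Proof. intros H. apply wf_clos_trans. apply conv_wf_wf, H. Qed.

(** Stratified definition: the judgment at world [x] is the least relation
    closed under the rules, where premises about strictly later worlds refer
    to the (already defined) judgment there, supplied as [D]. *)
Definition strat (H : conv_wf)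
  (F : W -> (W -> ctx -> form -> Prop) -> ctx -> form -> Prop)
  (G : ctx) (A : form) (w : W) : Prop :=
  Fix (Below_wf H) (fun _ => ctx -> form -> Prop)
      (fun x rec => F x (fun y G' A' => exists h : Below y x, rec y h G' A'))
      w G A.

Inductive cpl_at (x : W) (D : W -> ctx -> form -> Prop) : ctx -> form -> Prop :=
| cpl_hyp G A : In (A, x) G -> cpl_at x D G A
| cpl_botE G C : cpl_at x D G Bot -> cpl_at x D G C
| cpl_impI G A B : cpl_at x D ((A, x) :: G) B -> cpl_at x D G (Imp A B)
| cpl_impE G A B : cpl_at x D G (Imp A B) -> cpl_at x D G A -> cpl_at x D G B
| cpl_diaI G A w' : R x w' -> D w' G A -> cpl_at x D G (Dia A)
| cpl_boxI G A : (forall w', R x w' -> D w' G A) -> cpl_at x D G (Box A)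
| cpl_diaE G A C : cpl_at x D G (Dia A) ->
    (forall w', R x w' -> D w' G A -> cpl_at x D G C) -> cpl_at x D G C
| cpl_boxE G A C : cpl_at x D G (Box A) ->
    ((forall w', R x w' -> D w' G A) -> cpl_at x D G C) -> cpl_at x D G C.

(** The side condition "x <=* w" is split into the cases w = x and
    x <+ w (the latter is encoded in [D w], which includes [Below w x]). *)
Inductive cplstar_at (x : W) (D : W -> ctx -> form -> Prop) : ctx -> form -> Prop :=
| cs_hyp G A : In (A, x) G -> cplstar_at x D G A
| cs_botE_here G C : cplstar_at x D G Bot -> cplstar_at x D G C
| cs_botE_later G C w : D w G Bot -> cplstar_at x D G C
| cs_impI G A B : cplstar_at x D ((A, x) :: G) B -> cplstar_at x D G (Imp A B)
| cs_impE G A B : cplstar_at x D G (Imp A B) -> cplstar_at x D G A -> cplstar_at x D G B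
| cs_diaI G A w' : R x w' -> D w' G A -> cplstar_at x D G (Dia A)
| cs_boxI G A : (forall w', R x w' -> D w' G A) -> cplstar_at x D G (Box A)
| cs_diaE_here G A C : cplstar_at x D G (Dia A) ->
    (forall w', R x w' -> D w' G A -> cplstar_at x D G C) -> cplstar_at x D G C
| cs_diaE_later G A C w : D w G (Dia A) ->
    (forall w', R w w' -> D w' G A -> cplstar_at x D G C) -> cplstar_at x D G C
| cs_boxE_here G A C : cplstar_at x D G (Box A) ->
    ((forall w', R x w' -> D w' G A) -> cplstar_at x D G C) -> cplstar_at x D G C
| cs_boxE_later G A C w : D w G (Box A) ->
    ((forall w', R w w' -> D w' G A) -> cplstar_at x D G C) -> cplstar_at x D G C.

Inductive seq_at (x : W) (D : W -> ctx -> form -> Prop) : ctx -> form -> Prop :=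
| sq_init G q : In (Atom q, x) G -> seq_at x D G (Atom q)
| sq_botL G C : In (Bot, x) G -> seq_at x D G C
| sq_impR G A B : seq_at x D ((A, x) :: G) B -> seq_at x D G (Imp A B)
| sq_impL G A B C : In (Imp A B, x) G -> seq_at x D G A ->
    seq_at x D ((B, x) :: G) C -> seq_at x D G C
| sq_diaR G A w' : R x w' -> D w' G A -> seq_at x D G (Dia A)
| sq_boxR G A : (forall w', R x w' -> D w' G A) -> seq_at x D G (Box A)
| sq_diaL G A C : In (Dia A, x) G ->
    (forall w', R x w' -> D w' G A -> seq_at x D G C) -> seq_at x D G C
| sq_boxL G A C : In (Box A, x) G ->
    ((forall w', R x w' -> D w' G A) -> seq_at x D G C) -> seq_at x D G C.

Definition CPL (H : conv_wf) : ctx -> form -> W -> Prop := strat H cpl_at.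
Definition CPLstar (H : conv_wf) : ctx -> form -> W -> Prop := strat H cplstar_at.
Definition SeqCPL (H : conv_wf) : ctx -> form -> W -> Prop := strat H seq_at.

End Judgments.

Definition provH_star (A : form) : Prop :=
  forall (W : Type) (R : W -> W -> Prop) (H : conv_wf R) (w : W) (G : @ctx W),
    CPLstar R H G A w.

(** A schema (given as a map from its parameter A to the instance) is not an axiom. *)
Definition not_axiom_CPL (schema : form -> form) : Prop :=
  exists (W : Type) (R : W -> W -> Prop) (H : conv_wf R) (w : W) (G : @ctx W) (A : form),
    ~ CPL R H G (schema A) w.

Definition not_axiom_CPLstar (schema : form -> form) : Prop :=
  exists (W : Type) (R : W -> W -> Prop) (H : conv_wf R) (w : W) (G : @ctx W) (A : form),
    ~ CPLstar R H G (schema A) w.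

(* Main.v *)
Require Import Defs.
From Stdlib Require Import List.
From Stdlib Require Import Relations Wellfounded Classical FunctionalExtensionality PropExtensionality.
Import ListNotations.

Section Gen.
Context {W : Type} (R : W -> W -> Prop) (H : conv_wf R).

Definition Dn (F : W -> (W -> list (form * W) -> form -> Prop) -> list (form * W) -> form -> Prop)
  (x : W) : W -> list (form * W) -> form -> Prop :=
  fun y G' A' => exists _ : Below R y x, strat R H F G' A' y.

Lemma strat_eq F G A x : strat R H F G A x = F x (Dn F x) G A.
Proof.
  unfold strat at 1. rewrite Fix_eq.
  - reflexivity.
  - intros x0 f g Hfg. f_equal.
    apply functional_extensionality; intro y.
    apply functional_extensionality; intro G'.
    apply functional_extensionality; intro A'.
    apply propositional_extensionality. split; intros [h Hh]; exists h;
      [rewrite <- Hfg | rewrite Hfg]; exact Hh.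
Qed.

Lemma Below_irrefl x : ~ Below R x x.
Proof.
  assert (Ha := Below_wf R H x).
  induction Ha as [x _ IH]. intro Hx. exact (IH x Hx Hx).
Qed.

Lemma Below_step x y : R x y -> Below R y x.
Proof. intro Hr. apply t_step. exact Hr. Qed.

Lemma Below_tr x y z : Below R x y -> Below R y z -> Below R x z.
Proof. intros; eapply t_trans; eauto. Qed.

Local Notation S x G C := (seq_at R x (Dn (seq_at R) x) G C).

Lemma seq_unfold G A x : SeqCPL R H G A x <-> S x G A.
Proof. unfold SeqCPL. rewrite strat_eq. tauto. Qed.

Definition sub x (G K : list (form * W)) :=
  (forall B, In (B,x) G -> In (B,x) K) /\
  (forall z B, Below R z x -> (In (B,z) G <-> In (B,z) K)).

Lemma sub_later x z G K : sub x G K -> Below R z x -> sub z G K /\ sub z K G.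
Proof.
  intros [H1 H2] Hz. split; split.
  - intros B. apply (H2 z B Hz).
  - intros z' B Hz'. apply H2. eapply Below_tr; eauto.
  - intros B. apply (H2 z B Hz).
  - intros z' B Hz'. symmetry. apply H2. eapply Below_tr; eauto.
Qed.

Lemma sub_cons x G K A : sub x G K -> sub x ((A,x)::G) ((A,x)::K).
Proof.
  intros [H1 H2]. split.
  - intros B [E|Hin]; [left; exact E | right; apply H1; exact Hin].
  - intros z B Hz. simpl. split; intros [E|Hin].
    + inversion E; subst. exfalso; apply (Below_irrefl _ Hz).
    + right; apply H2; auto.
    + inversion E; subst. exfalso; apply (Below_irrefl _ Hz).
    + right; apply H2; auto.
Qed.

Lemma weak : forall x G K C, sub x G K -> SeqCPL R H G C x -> SeqCPL R H K C x.
Proof.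
  intro x. induction x as [x IHx] using (well_founded_induction (Below_wf R H)).
  intros G K C Hs HG. rewrite seq_unfold in *.
  revert K Hs. induction HG; intros K Hs.
  - apply sq_init. apply (proj1 Hs). exact H0.
  - apply sq_botL. apply (proj1 Hs). exact H0.
  - apply sq_impR. apply IHHG. apply sub_cons. exact Hs.
  - eapply sq_impL; [apply (proj1 Hs); exact H0 | apply IHHG1; exact Hs |].
    apply IHHG2. apply sub_cons. exact Hs.
  - destruct H1 as [hb Hd]. eapply sq_diaR; [exact H0|]. exists hb.
    apply (IHx w' hb G K A (proj1 (sub_later _ _ _ _ Hs hb)) Hd).
  - apply sq_boxR. intros w' Hr. destruct (H0 w' Hr) as [hb Hd]. exists hb.
    apply (IHx w' hb G K A (proj1 (sub_later _ _ _ _ Hs hb)) Hd).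
  - eapply sq_diaL; [apply (proj1 Hs); exact H0|].
    intros w' Hr [hb Hd]. apply (H2 w' Hr); [|exact Hs]. exists hb.
    apply (IHx w' hb K G A (proj2 (sub_later _ _ _ _ Hs hb)) Hd).
  - eapply sq_boxL; [apply (proj1 Hs); exact H0|].
    intros Hall. apply H2; [|exact Hs]. intros w' Hr.
    destruct (Hall w' Hr) as [hb Hd]. exists hb.
    apply (IHx w' hb K G A (proj2 (sub_later _ _ _ _ Hs hb)) Hd).
Qed.

Lemma wkS x G K C : sub x G K -> S x G C -> S x K C.
Proof. intros Hs Hd. apply seq_unfold. apply weak with G; auto. apply seq_unfold; auto. Qed.

Definition bagr x (G K : list (form * W)) :=
  forall z B, Below R z x -> (In (B,z) G <-> In (B,z) K).

Lemma Dn_tr x z G K B : bagr x G K ->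
  Dn (seq_at R) x z G B -> Dn (seq_at R) x z K B.
Proof.
  intros Hb [hb Hd]. exists hb. apply weak with G; [|exact Hd].
  split.
  - intros B0. apply Hb. exact hb.
  - intros z' B0 Hz'. apply Hb. eapply Below_tr; eauto.
Qed.

Lemma bagr_cons x G A : bagr x ((A,x)::G) G.
Proof.
  intros z B Hz. simpl. split; [intros [E|Hin]; [|exact Hin]|intro; right; auto].
  inversion E; subst. exfalso; apply (Below_irrefl _ Hz).
Qed.

Lemma bagr_sym x G K : bagr x G K -> bagr x K G.
Proof. intros Hb z B Hz. symmetry. apply Hb; auto. Qed.

Lemma sub_cons_r x G A : sub x G ((A,x)::G).
Proof.
  split; [intros B Hin; right; exact Hin|].
  apply bagr_sym. apply bagr_cons.
Qed.

Lemma botE x G F (Hd : S x G F) : F = Bot -> forall C, S x G C.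
Proof.
  induction Hd; intros EF C0; try discriminate.
  - apply sq_botL; auto.
  - eapply sq_impL; eauto.
  - eapply sq_diaL; [eauto|]. intros w' Hr Hd'. eapply H2; eauto.
  - eapply sq_boxL; [eauto|]. intros Hall. eapply H2; eauto.
Qed.

Lemma impInv x G F (Hd : S x G F) : forall B1 B2, F = Imp B1 B2 -> S x ((B1,x)::G) B2.
Proof.
  induction Hd; intros B1 B2 E; try discriminate.
  - apply sq_botL. right; auto.
  - injection E; intros; subst; exact Hd.
  - eapply sq_impL with (A := A) (B := B).
    + right; exact H0.
    + apply wkS with G; [apply sub_cons_r | exact Hd1].
    + apply wkS with ((B1,x)::(B,x)::G); [|apply IHHd2; exact E].
      split.
      * intros B0 Hin. simpl in *. tauto.
      * intros z B0 Hz. simpl. tauto.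
  - eapply sq_diaL; [right; exact H0|]. intros w' Hr Hd'.
    apply (H2 w' Hr (Dn_tr _ _ _ _ _ (bagr_cons _ _ _) Hd') B1 B2 E).
  - eapply sq_boxL; [right; exact H0|]. intros Hall.
    apply H2; [|exact E]. intros w' Hr.
    apply Dn_tr with ((B1,x)::G); [apply bagr_cons | apply Hall; auto].
Qed.

Lemma diaElim x G F (Hd : S x G F) : forall B C, F = Dia B ->
  (forall w', R x w' -> Dn (seq_at R) x w' G B -> S x G C) -> S x G C.
Proof.
  induction Hd; intros B1 C1 E Hk; try discriminate.
  - apply sq_botL; auto.
  - eapply sq_impL; [exact H0 | exact Hd1 |]. apply (IHHd2 B1 C1 E).
    intros w' Hr Hd'. apply wkS with G; [apply sub_cons_r|].
    apply Hk with w'; auto. apply Dn_tr with ((B,x)::G); [apply bagr_cons|exact Hd'].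
  - injection E; intros; subst. eapply Hk; eauto.
  - eapply sq_diaL; [exact H0|]. intros w' Hr Hd'. eapply H2; eauto.
  - eapply sq_boxL; [exact H0|]. intros Hall. eapply H2; eauto.
Qed.

Lemma boxElim x G F (Hd : S x G F) : forall B C, F = Box B ->
  ((forall w', R x w' -> Dn (seq_at R) x w' G B) -> S x G C) -> S x G C.
Proof.
  induction Hd; intros B1 C1 E Hk; try discriminate.
  - apply sq_botL; auto.
  - eapply sq_impL; [exact H0 | exact Hd1 |]. apply (IHHd2 B1 C1 E).
    intros Hall. apply wkS with G; [apply sub_cons_r|].
    apply Hk. intros w' Hr.
    apply Dn_tr with ((B,x)::G); [apply bagr_cons | apply Hall; auto].
  - injection E; intros; subst. apply Hk; exact H0.
  - eapply sq_diaL; [exact H0|]. intros w' Hr Hd'. eapply H2; eauto.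
  - eapply sq_boxL; [exact H0|]. intros Hall. eapply H2; eauto.
Qed.

Definition cutP A := forall x G C, S x G A -> S x ((A,x)::G) C -> S x G C.

Definition agr x (G K : list (form * W)) :=
  forall z B, (z = x \/ Below R z x) -> (In (B,z) G <-> In (B,z) K).

Lemma agr_bagr x K A G : agr x K ((A,x)::G) -> bagr x K G.
Proof.
  intros Ha z B Hz. rewrite (Ha z B (or_intror Hz)). apply bagr_cons. exact Hz.
Qed.

Lemma agr_ext x K A G B1 : agr x K ((A,x)::G) -> agr x ((B1,x)::K) ((A,x)::(B1,x)::G).
Proof.
  intros Ha z B Hz. specialize (Ha z B Hz). simpl in *. tauto.
Qed.

Lemma cut_step A (IHs : forall B1 B2, A = Imp B1 B2 -> cutP B1 /\ cutP B2) : cutP A.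
Proof.
  intros x G C LA RD.
  cut (forall K C, S x K C -> forall G, agr x K ((A,x)::G) -> S x G A -> S x G C).
  { intros Hc. apply (Hc _ _ RD G); [|exact LA]. intros z B _; tauto. }
  clear G C LA RD.
  intros K C0 Hd. induction Hd; intros G0 Hag LA0.
  - destruct (proj1 (Hag x (Atom q) (or_introl eq_refl)) H0) as [E|Hin].
    + inversion E; subst. exact LA0.
    + apply sq_init; exact Hin.
  - destruct (proj1 (Hag x Bot (or_introl eq_refl)) H0) as [E|Hin].
    + inversion E; subst. eapply botE; eauto.
    + apply sq_botL; exact Hin.
  - apply sq_impR. apply IHHd; [apply agr_ext; exact Hag|].
    apply wkS with G0; [apply sub_cons_r|exact LA0].
  - assert (t1 := IHHd1 G0 Hag LA0).
    assert (t2 := IHHd2 ((B,x)::G0) (agr_ext _ _ _ _ _ Hag)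
                   (wkS _ _ _ _ (sub_cons_r _ _ _) LA0)).
    destruct (proj1 (Hag x (Imp A0 B) (or_introl eq_refl)) H0) as [E|Hin].
    + inversion E; subst. destruct (IHs A0 B eq_refl) as [c1 c2].
      apply (c2 x G0 C); [|exact t2].
      apply (c1 x G0 B t1). apply (impInv _ _ _ LA0 A0 B eq_refl).
    + eapply sq_impL; eauto.
  - eapply sq_diaR; [exact H0|]. apply Dn_tr with G; [|exact H1].
    eapply agr_bagr; eauto.
  - apply sq_boxR. intros w' Hr. apply Dn_tr with G; [|apply H0; exact Hr].
    eapply agr_bagr; eauto.
  - destruct (proj1 (Hag x (Dia A0) (or_introl eq_refl)) H0) as [E|Hin].
    + inversion E; subst. apply (diaElim x G0 (Dia A0) LA0 A0 C eq_refl).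
      intros w' Hr Hd'. apply (H2 w' Hr); [|exact Hag|exact LA0].
      apply Dn_tr with G0; [apply bagr_sym; eapply agr_bagr; eauto|exact Hd'].
    + eapply sq_diaL; [exact Hin|]. intros w' Hr Hd'.
      apply (H2 w' Hr); [|exact Hag|exact LA0].
      apply Dn_tr with G0; [apply bagr_sym; eapply agr_bagr; eauto|exact Hd'].
  - destruct (proj1 (Hag x (Box A0) (or_introl eq_refl)) H0) as [E|Hin].
    + inversion E; subst. apply (boxElim x G0 (Box A0) LA0 A0 C eq_refl).
      intros Hall. apply H2; [|exact Hag|exact LA0]. intros w' Hr.
      apply Dn_tr with G0; [apply bagr_sym; eapply agr_bagr; eauto|apply Hall; exact Hr].
    + eapply sq_boxL; [exact Hin|]. intros Hall.
      apply H2; [|exact Hag|exact LA0]. intros w' Hr.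
      apply Dn_tr with G0; [apply bagr_sym; eapply agr_bagr; eauto|apply Hall; exact Hr].
Qed.

Lemma cut_all A : cutP A.
Proof.
  induction A; apply cut_step; intros B1 B2 E; try discriminate.
  injection E; intros; subst; auto.
Qed.

Lemma sub_strip y w X G : Below R y w -> sub y ((X,w)::G) G.
Proof.
  intros Hb. split.
  - intros B [E|Hin]; [|exact Hin]. inversion E; subst.
    exfalso; apply (Below_irrefl _ Hb).
  - intros z B Hz. simpl. split; [intros [E|Hin]; [|exact Hin] | intro; right; auto].
    inversion E; subst. exfalso. eapply Below_irrefl. eapply Below_tr; eauto.
Qed.

Lemma part3 G w A :
  ~ (exists w', R w w' /\ SeqCPL R H G Bot w') ->
  SeqCPL R H G (Imp (Dia (Neg A)) (Neg (Box A))) w /\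
  SeqCPL R H G (Imp (Box (Neg A)) (Neg (Dia A))) w.
Proof.
  intros Hno. unfold Neg. split; apply seq_unfold; apply sq_impR; apply sq_impR.
  - eapply sq_diaL with (A := Imp A Bot); [simpl; auto|]. intros w' Hr Hd1.
    eapply sq_boxL with (A := A); [simpl; auto|]. intros Hall.
    exfalso. apply Hno. exists w'. split; [exact Hr|].
    destruct Hd1 as [hb d1]. destruct (Hall w' Hr) as [_ d2].
    apply (proj1 (seq_unfold _ _ _)) in d1; apply (proj1 (seq_unfold _ _ _)) in d2.
    assert (c := cut_all A w' _ Bot d2 (impInv _ _ _ d1 A Bot eq_refl)).
    apply (proj2 (seq_unfold _ _ _)) in c.
    apply weak with ((Dia (Imp A Bot), w) :: G); [apply sub_strip; exact hb|].
    apply weak with ((Box A, w) :: (Dia (Imp A Bot), w) :: G); [apply sub_strip; exact hb|].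
    exact c.
  - eapply sq_diaL with (A := A); [simpl; auto|]. intros w' Hr Hd1.
    eapply sq_boxL with (A := Imp A Bot); [simpl; auto|]. intros Hall.
    exfalso. apply Hno. exists w'. split; [exact Hr|].
    destruct Hd1 as [hb d1]. destruct (Hall w' Hr) as [_ d2].
    apply (proj1 (seq_unfold _ _ _)) in d1; apply (proj1 (seq_unfold _ _ _)) in d2.
    assert (c := cut_all A w' _ Bot d1 (impInv _ _ _ d2 A Bot eq_refl)).
    apply (proj2 (seq_unfold _ _ _)) in c.
    apply weak with ((Box (Imp A Bot), w) :: G); [apply sub_strip; exact hb|].
    apply weak with ((Dia A, w) :: (Box (Imp A Bot), w) :: G); [apply sub_strip; exact hb|].
    exact c.
Qed.

Lemma cs_unfold G A x : CPLstar R H G A x <-> cplstar_at R x (Dn (cplstar_at R) x) G A.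
Proof. unfold CPLstar. rewrite strat_eq. tauto. Qed.

Lemma part1 G w A :
  CPLstar R H G (Imp (Dia (Neg A)) (Neg (Box A))) w /\
  CPLstar R H G (Imp (Box (Neg A)) (Neg (Dia A))) w.
Proof.
  unfold Neg. split; apply cs_unfold; apply cs_impI; apply cs_impI.
  - eapply cs_diaE_here with (A := Imp A Bot); [apply cs_hyp; simpl; auto|].
    intros w' Hr Hd1.
    eapply cs_boxE_here with (A := A); [apply cs_hyp; simpl; auto|]. intros Hall.
    destruct Hd1 as [hb d1]. destruct (Hall w' Hr) as [_ d2].
    eapply cs_botE_later with (w := w'). exists hb.
    apply cs_unfold. apply cs_unfold in d1. apply cs_unfold in d2.
    eapply cs_impE; eauto.
  - eapply cs_diaE_here with (A := A); [apply cs_hyp; simpl; auto|].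
    intros w' Hr Hd1.
    eapply cs_boxE_here with (A := Imp A Bot); [apply cs_hyp; simpl; auto|]. intros Hall.
    destruct Hd1 as [hb d1]. destruct (Hall w' Hr) as [_ d2].
    eapply cs_botE_later with (w := w'). exists hb.
    apply cs_unfold. apply cs_unfold in d1. apply cs_unfold in d2.
    eapply cs_impE; eauto.
Qed.

Lemma cpl_unfold G A x : CPL R H G A x <-> cpl_at R x (Dn (cpl_at R) x) G A.
Proof. unfold CPL. rewrite strat_eq. tauto. Qed.

End Gen.

Definition R2 (a b : bool) : Prop := a = true /\ b = false.

Lemma R2_wf : conv_wf R2.
Proof.
  intros [f Hf]. destruct (Hf 0) as [_ E1]. destruct (Hf 1) as [E2 _].
  rewrite E1 in E2; discriminate.
Qed.

Lemma R2_below y x : Below R2 y x -> y = false /\ x = true.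
Proof.
  intro Hb. induction Hb.
  - destruct H as [E1 E2]. auto.
  - destruct IHHb1, IHHb2; auto.
Qed.

Fixpoint uval (b : Prop) (A : form) : Prop :=
  match A with
  | Atom _ => b | Bot => False | Imp A B => uval b A -> uval b B
  | Dia _ => False | Box _ => True
  end.

Fixpoint vval (P : form -> Prop) (A : form) : Prop :=
  match A with
  | Atom _ => False | Bot => False | Imp A B => vval P A -> vval P B
  | Dia B => P B | Box B => P B
  end.

Lemma cpl_false_sound b D G C : cpl_at R2 false D G C ->
  (forall B, In (B,false) G -> uval b B) -> uval b C.
Proof.
  intro Hd; induction Hd; intros Hc; simpl in *.
  - auto.
  - destruct (IHHd Hc).
  - intro HA. apply IHHd. intros B0 [E|Hin]; [inversion E; subst; auto|auto].
  - apply IHHd1; auto.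
  - destruct H as [E _]; discriminate.
  - trivial.
  - destruct (IHHd Hc).
  - apply H0; auto. intros w' [E _]; discriminate.
Qed.

Lemma cpl_false_wk D G C : cpl_at R2 false D G C ->
  forall K, (forall B, In (B,false) G -> In (B,false) K) -> cpl_at R2 false D K C.
Proof.
  intro Hd; induction Hd; intros K Hk.
  - apply cpl_hyp; auto.
  - apply cpl_botE; auto.
  - apply cpl_impI; apply IHHd. intros B0 [E|Hin]; [left; auto|right; auto].
  - eapply cpl_impE; eauto.
  - destruct H as [E _]; discriminate.
  - apply cpl_boxI; intros w' [E _]; discriminate.
  - eapply cpl_diaE; [apply IHHd; auto|]. intros w' [E _]; discriminate.
  - eapply cpl_boxE; [apply IHHd; auto|]. intros _. apply H0; auto.
    intros w' [E _]; discriminate.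
Qed.

Lemma cpl_tr G K A : (forall B, In (B,false) G -> In (B,false) K) ->
  CPL R2 R2_wf G A false -> CPL R2 R2_wf K A false.
Proof.
  intros Hk Hd. apply cpl_unfold. apply cpl_unfold in Hd.
  eapply cpl_false_wk; eauto.
Qed.

Lemma cpl_true_sound G0 G C :
  cpl_at R2 true (Dn R2 R2_wf (cpl_at R2) true) G C ->
  (forall B, In (B,false) G <-> In (B,false) G0) ->
  (forall B, In (B,true) G -> vval (fun B => CPL R2 R2_wf G0 B false) B) ->
  vval (fun B => CPL R2 R2_wf G0 B false) C.
Proof.
  intro Hd; induction Hd; intros Hf Ht; simpl in *.
  - auto.
  - destruct (IHHd Hf Ht).
  - intro HA. apply IHHd.
    + intros B0. simpl. split; [intros [E|Hin]; [discriminate|apply Hf; auto]|].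
      intro; right; apply Hf; auto.
    + intros B0 [E|Hin]; [inversion E; subst; auto|auto].
  - apply IHHd1; auto.
  - destruct H as [_ E]; subst. destruct H0 as [_ Hd].
    eapply cpl_tr; [|exact Hd]. intros B0; apply Hf.
  - destruct (H false (conj eq_refl eq_refl)) as [_ Hd].
    eapply cpl_tr; [|exact Hd]. intros B0; apply Hf.
  - apply (H0 false (conj eq_refl eq_refl)); auto.
    exists (Below_step R2 true false (conj eq_refl eq_refl)).
    eapply cpl_tr; [|exact (IHHd Hf Ht)]. intros B0; apply Hf.
  - apply H0; auto. intros w' [_ E]; subst.
    exists (Below_step R2 true false (conj eq_refl eq_refl)).
    eapply cpl_tr; [|exact (IHHd Hf Ht)]. intros B0; apply Hf.
Qed.

Lemma cpl_notax (sch : form -> form) G0 A :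
  (forall B, In (B,true) G0 -> False) ->
  ~ vval (fun B => CPL R2 R2_wf G0 B false) (sch A) ->
  not_axiom_CPL sch.
Proof.
  intros Hn Hv. exists bool, R2, R2_wf, true, G0, A. intro Hd.
  apply Hv. apply cpl_unfold in Hd. eapply cpl_true_sound; eauto.
  - intros; tauto.
  - intros B Hin; destruct (Hn B Hin).
Qed.

Lemma P_bot A : CPL R2 R2_wf [(Bot,false)] A false.
Proof. apply cpl_unfold. apply cpl_botE. apply cpl_hyp. left; auto. Qed.

Lemma P_q : ~ CPL R2 R2_wf [] (Atom 0) false.
Proof.
  intro Hd. apply cpl_unfold in Hd.
  apply (cpl_false_sound False _ _ _ Hd). intros B [].
Qed.

Lemma P_nq : ~ CPL R2 R2_wf [] (Neg (Atom 0)) false.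
Proof.
  intro Hd. apply cpl_unfold in Hd.
  apply (cpl_false_sound True _ _ _ Hd); [intros B []|exact I].
Qed.

Lemma cs_false_sound b D G C :
  (forall w G A, ~ D w G A) ->
  cplstar_at R2 false D G C ->
  (forall B, In (B,false) G -> uval b B) -> uval b C.
Proof.
  intros HD Hd; induction Hd; intros Hc; simpl in *.
  - auto.
  - destruct (IHHd Hc).
  - destruct (HD _ _ _ H).
  - intro HA. apply IHHd. intros B0 [E|Hin]; [inversion E; subst; auto|auto].
  - apply IHHd1; auto.
  - destruct H as [E _]; discriminate.
  - trivial.
  - destruct (IHHd Hc).
  - destruct (HD _ _ _ H).
  - apply H0; auto. intros w' [E _]; discriminate.
  - destruct (HD _ _ _ H).
Qed.

Lemma cs_false_wk D G C :
  (forall w G A, ~ D w G A) ->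
  cplstar_at R2 false D G C ->
  forall K, (forall B, In (B,false) G -> In (B,false) K) -> cplstar_at R2 false D K C.
Proof.
  intros HD Hd; induction Hd; intros K Hk.
  - apply cs_hyp; auto.
  - apply cs_botE_here; auto.
  - destruct (HD _ _ _ H).
  - apply cs_impI; apply IHHd. intros B0 [E|Hin]; [left; auto|right; auto].
  - eapply cs_impE; eauto.
  - destruct H as [E _]; discriminate.
  - apply cs_boxI; intros w' [E _]; discriminate.
  - eapply cs_diaE_here; [apply IHHd; auto|]. intros w' [E _]; discriminate.
  - destruct (HD _ _ _ H).
  - eapply cs_boxE_here; [apply IHHd; auto|]. intros _. apply H0; auto.
    intros w' [E _]; discriminate.
  - destruct (HD _ _ _ H).
Qed.

Lemma HD_false : forall w G A, ~ Dn R2 R2_wf (cplstar_at R2) false w G A.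
Proof.
  intros w G A [hb _]. destruct (R2_below _ _ hb) as [_ E]; discriminate.
Qed.

Lemma cs_tr G K A : (forall B, In (B,false) G -> In (B,false) K) ->
  CPLstar R2 R2_wf G A false -> CPLstar R2 R2_wf K A false.
Proof.
  intros Hk Hd. apply cs_unfold. apply cs_unfold in Hd.
  eapply cs_false_wk; eauto. apply HD_false.
Qed.

Lemma cs_true_sound G C :
  cplstar_at R2 true (Dn R2 R2_wf (cplstar_at R2) true) G C ->
  (forall B, ~ In (B,false) G) ->
  (forall B, In (B,true) G -> vval (fun B => CPLstar R2 R2_wf [] B false) B) ->
  vval (fun B => CPLstar R2 R2_wf [] B false) C.
Proof.
  intro Hd; induction Hd; intros Hf Ht; simpl in *.
  - auto.
  - destruct (IHHd Hf Ht).
  - destruct H as [hb Hd]. destruct (R2_below _ _ hb) as [E _]; subst.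
    apply cs_unfold in Hd.
    destruct (cs_false_sound False _ _ _ HD_false Hd).
    intros B Hin; destruct (Hf _ Hin).
  - intro HA. apply IHHd.
    + intros B0 [E|Hin]; [discriminate|apply (Hf B0 Hin)].
    + intros B0 [E|Hin]; [inversion E; subst; auto|auto].
  - apply IHHd1; auto.
  - destruct H as [_ E]; subst. destruct H0 as [_ Hd].
    eapply cs_tr; [|exact Hd]. intros B0 Hin; destruct (Hf _ Hin).
  - destruct (H false (conj eq_refl eq_refl)) as [_ Hd].
    eapply cs_tr; [|exact Hd]. intros B0 Hin; destruct (Hf _ Hin).
  - apply (H0 false (conj eq_refl eq_refl)); auto.
    exists (Below_step R2 true false (conj eq_refl eq_refl)).
    eapply cs_tr; [|exact (IHHd Hf Ht)]. intros B0 [].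
  - destruct H as [hb Hd]. destruct (R2_below _ _ hb) as [E _]; subst.
    apply cs_unfold in Hd.
    destruct (cs_false_sound False _ _ _ HD_false Hd).
    intros B Hin; destruct (Hf _ Hin).
  - apply H0; auto. intros w' [_ E]; subst.
    exists (Below_step R2 true false (conj eq_refl eq_refl)).
    eapply cs_tr; [|exact (IHHd Hf Ht)]. intros B0 [].
  - destruct H as [hb _]. destruct (R2_below _ _ hb) as [E _]; subst.
    apply H1; auto. intros w' [E _]; discriminate.
Qed.

Lemma cs_notax (sch : form -> form) A :
  ~ vval (fun B => CPLstar R2 R2_wf [] B false) (sch A) ->
  not_axiom_CPLstar sch.
Proof.
  intros Hv. exists bool, R2, R2_wf, true, [], A. intro Hd.
  apply Hv. apply cs_unfold in Hd. apply (cs_true_sound _ _ Hd).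
  - intros B [].
  - intros B [].
Qed.

Lemma Q_q : ~ CPLstar R2 R2_wf [] (Atom 0) false.
Proof.
  intro Hd. apply cs_unfold in Hd.
  apply (cs_false_sound False _ _ _ HD_false Hd). intros B [].
Qed.

Lemma Q_nq : ~ CPLstar R2 R2_wf [] (Neg (Atom 0)) false.
Proof.
  intro Hd. apply cs_unfold in Hd.
  apply (cs_false_sound True _ _ _ HD_false Hd); [intros B []|exact I].
Qed.

Theorem theorem8 :
  (* (i) *)
  (forall A : form,
      provH_star (Imp (Dia (Neg A)) (Neg (Box A))) /\
      provH_star (Imp (Box (Neg A)) (Neg (Dia A)))) /\
  (* (ii) *)
  not_axiom_CPL (fun A => Imp (Dia (Neg A)) (Neg (Box A))) /\
  not_axiom_CPL (fun A => Imp (Box (Neg A)) (Neg (Dia A))) /\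
  (* (iii) *)
  (forall (W : Type) (R : W -> W -> Prop) (H : conv_wf R) (G : @ctx W) (w : W) (A : form),
      ~ (exists w', R w w' /\ SeqCPL R H G Bot w') ->
      SeqCPL R H G (Imp (Dia (Neg A)) (Neg (Box A))) w /\
      SeqCPL R H G (Imp (Box (Neg A)) (Neg (Dia A))) w) /\
  (* (iv) *)
  (not_axiom_CPL (fun A => Imp (Neg (Dia A)) (Box (Neg A))) /\
   not_axiom_CPLstar (fun A => Imp (Neg (Dia A)) (Box (Neg A)))) /\
  (* (v) *)
  (not_axiom_CPL (fun A => Imp (Neg (Box A)) (Dia (Neg A))) /\
   not_axiom_CPLstar (fun A => Imp (Neg (Box A)) (Dia (Neg A)))).
Proof.
  split; [|split; [|split; [|split; [|split; [split|split]]]]].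
  - intros A; split; intros W R H w G; apply part1.
  - apply (cpl_notax _ [(Bot,false)] (Atom 0)); [intros B [E|[]]; discriminate|].
    simpl. intro Hv. exact (Hv (P_bot _) (P_bot _)).
  - apply (cpl_notax _ [(Bot,false)] (Atom 0)); [intros B [E|[]]; discriminate|].
    simpl. intro Hv. exact (Hv (P_bot _) (P_bot _)).
  - intros W R H G w A Hno. apply part3; auto.
  - apply (cpl_notax _ [] (Atom 0)); [intros B []|].
    simpl. intro Hv. exact (P_nq (Hv P_q)).
  - apply (cs_notax _ (Atom 0)).
    simpl. intro Hv. exact (Q_nq (Hv Q_q)).
  - apply (cpl_notax _ [] (Atom 0)); [intros B []|].
    simpl. intro Hv. exact (P_nq (Hv P_q)).
  - apply (cs_notax _ (Atom 0)).
    simpl. intro Hv. exact (Q_nq (Hv Q_q)).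
Qed.
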